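(* Let $n=m^2$ where $m>1$ is odd and squarefree. Then $C_{S(n)^*}=9$.
   Context: For a natural number $n$, $\mathbb Z_n=\mathbb Z/n\mathbb Z$, $S(n)=\{x^2:x\in\mathbb Z_n\}$, $S(n)^*=S(n)\setminus\{0\}$. For $A\subseteq\mathbb Z_n$, a sequence $(y_1,\dots,y_t)$ ($t\ge1$) in $\mathbb Z_n$ is an $A$-weighted zero-sum sequence if there exist $a_1,\dots,a_t\in A$ with $\sum a_iy_i=0$. $C_A(n)$ is the least positive integer $t$ such that every sequence of length $t$ in $\mathbb Z_n$ has a nonempty subsequence of consecutive terms that is an $A$-weighted zero-sum sequence; $C_{S(n)^*}=C_{S(n)^*}(n)$. *)

(* Defs.v *)
From mathcomp Require Import all_boot all_algebra.
Unset Printing Implicit Defensive.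
Import GRing.Theory.
Local Open Scope ring_scope.

Definition sqset (n : nat) : pred ('Z_n) := fun a => [exists x : 'Z_n, a == x ^+ 2].
Definition sqset_star (n : nat) : pred 'Z_n := fun a => (a != 0) && sqset n a.

Definition weighted_zero_sum (n : nat) (A : pred 'Z_n) (y : seq 'Z_n) : Prop :=
  (0 < size y)%N /\
  exists a : seq 'Z_n, size a = size y /\ all A a /\
    \sum_(i < size y) a`_i * y`_i = 0.

Definition C_property (n : nat) (A : pred 'Z_n) (t : nat) : Prop :=
  forall y : seq 'Z_n, size y = t ->
    exists z : seq 'Z_n, infix z y /\ weighted_zero_sum n A z.

Definition is_C_constant (n : nat) (A : pred 'Z_n) (c : nat) : Prop :=
  (0 < c)%N /\ C_property n A c /\ forall t, (0 < t)%N -> (t < c)%N -> ~ C_property n A t.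

Definition squarefree (m : nat) : bool :=
  [forall p : 'I_m.+1, prime p ==> ~~ (p * p %| m)%N].

(* Main.v *)
Require Import Defs.
From mathcomp Require Import all_boot all_algebra.
From mathcomp Require Import all_field all_solvable.
From mathcomp Require Import ring zify.
From Stdlib Require Import Classical.
Import GRing.Theory.
Set Implicit Arguments. Unset Strict Implicit. Unset Printing Implicit Defensive.

Section Fp.
Variable p : nat.
Hypothesis pr : prime p.
Hypothesis podd : odd p.
Local Open Scope ring_scope.

Definition issq (x : 'F_p) := exists y : 'F_p, x = y ^+ 2.

Lemma Fp_unity (x : 'F_p) : x != 0 -> x ^+ p.-1 = 1.
Proof.
move=> x0; have := expf_card x; rewrite card_Fp //.
have -> : x ^+ p = x ^+ p.-1.+1 by rewrite prednK // prime_gt0.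
by rewrite exprS => /(canRL (mulKf x0)) ->; rewrite mulVf.
Qed.

Lemma Fp_prim : exists g : 'F_p, (p.-1).-primitive_root g.
Proof.
have q0 : (0 < p.-1)%N by rewrite -subn1 subn_gt0 prime_gt1.
have : has (p.-1).-primitive_root [seq x <- enum 'F_p | x != 0].
  apply: has_prim_root => //.
  - by apply/allP => x; rewrite mem_filter => /andP[x0 _]; rewrite unity_rootE Fp_unity.
  - by rewrite filter_uniq // enum_uniq.
  - have -> : [seq x <- enum 'F_p | x != 0] = enum (predC1 (0 : 'F_p)).
      by rewrite enumT /enum_mem; apply: eq_filter => x.
    by rewrite -cardE cardC1 card_Fp.
by case/hasP=> g _ pg; exists g.
Qed.


Lemma q_even : odd p.-1 = false.
Proof. by move: podd (prime_gt0 pr); case: p => //= n; case: (odd n). Qed.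

Section G.
Variable g : 'F_p.
Hypothesis pg : (p.-1).-primitive_root g.

Lemma g_neq0 : g != 0.
Proof.
apply/eqP=> g0; have := prim_expr_order pg; rewrite g0 expr0n.
have -> : (p.-1 == 0)%N = false.
  by apply/negbTE; rewrite -lt0n -subn1 subn_gt0 prime_gt1.
by move/eqP; rewrite eq_sym oner_eq0.
Qed.

Lemma Fp_log (x : 'F_p) : x != 0 -> exists i, x = g ^+ i.
Proof. by move=> x0; case: (prim_rootP pg (Fp_unity x0)) => i ->; exists i. Qed.

Lemma issq_odd i : issq (g ^+ i) -> ~~ odd i.
Proof.
case=> y E.
have y0 : y != 0.
  apply/eqP=> y0; move: E; rewrite y0 expr0n /= => /eqP; rewrite expf_eq0.
  by rewrite (negbTE g_neq0) andbF.
case: (Fp_log y0) => j Ej; move: E; rewrite Ej -exprM => /eqP.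
rewrite (eq_prim_root_expr pg) => /eqP E.
by rewrite -(odd_mod i q_even) E odd_mod ?q_even // oddM andbF.
Qed.

Lemma even_issq i : ~~ odd i -> issq (g ^+ i).
Proof.
move=> ei; exists (g ^+ i./2); rewrite -exprM.
by congr (_ ^+ _); rewrite muln2 -{1}(odd_double_half i) (negbTE ei).
Qed.

Lemma g_nsq : ~ issq g.
Proof. by move=> h; have := @issq_odd 1; rewrite expr1 => /(_ h). Qed.

Lemma mul_nsq (x y : 'F_p) : x != 0 -> y != 0 -> ~ issq x -> ~ issq y -> issq (x * y).
Proof.
move=> /Fp_log[i ->] /Fp_log[j ->] hi hj; rewrite -exprD; apply: even_issq.
rewrite oddD.
have oi : odd i by apply: contraT => /even_issq.
have oj : odd j by apply: contraT => /even_issq.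
by rewrite oi oj.
Qed.

Lemma sum_nsq : exists s : 'F_p, s != 0 /\ ~ issq (s ^+ 2 + 1).
Proof.
apply: NNPP => H.
have H' : forall s : 'F_p, s != 0 -> issq (s ^+ 2 + 1).
  by move=> s s0; apply: NNPP => hs; apply: H; exists s.
have all_sq : forall k : nat, issq (k%:R).
  elim=> [|k [s Es]]; first by exists 0; rewrite expr0n.
  rewrite -addn1 natrD Es.
  have [->|s0] := eqVneq s 0; first by exists 1; rewrite expr0n add0r expr1n.
  exact: H'.
by apply: g_nsq; rewrite -(natr_Zp g); apply: all_sq.
Qed.

End G.


Lemma Cp3F (z0 z1 z2 : 'F_p) : z0 != 0 -> z1 != 0 -> z2 != 0 ->
  (exists c0 c1 : 'F_p, [/\ c0 != 0, c1 != 0 & c0 ^+ 2 * z0 + c1 ^+ 2 * z1 = 0]) \/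
  (exists c1 c2 : 'F_p, [/\ c1 != 0, c2 != 0 & c1 ^+ 2 * z1 + c2 ^+ 2 * z2 = 0]) \/
  (exists c0 c1 c2 : 'F_p, [/\ c0 != 0, c1 != 0, c2 != 0 &
       c0 ^+ 2 * z0 + c1 ^+ 2 * z1 + c2 ^+ 2 * z2 = 0]).
Proof.
move=> n0 n1 n2; have [g pg] := Fp_prim.
set w := - z1 / z0; set w' := - z2 / z1.
have w0 : w != 0 by rewrite /w mulf_neq0 ?oppr_eq0 ?invr_eq0.
have w'0 : w' != 0 by rewrite /w' mulf_neq0 ?oppr_eq0 ?invr_eq0.
case: (classic (issq w)) => [[y Ey]|nw].
  left; exists y, 1; split => //; last by rewrite -Ey /w expr1n mul1r; field.
  by apply: contra w0 => /eqP y0; rewrite Ey y0 expr0n.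
case: (classic (issq w')) => [[y Ey]|nw'].
  right; left; exists y, 1; split => //; last by rewrite -Ey /w' expr1n mul1r; field.
  by apply: contra w'0 => /eqP y0; rewrite Ey y0 expr0n.
right; right.
have [t ht] := mul_nsq pg w0 w'0 nw nw'.
have [s [s0 ns]] := sum_nsq pg.
set nu := s ^+ 2 + 1 in ns.
have nu0 : nu != 0 by apply: contra_not_neq ns => ->; exists 0; rewrite expr0n.
have [h hh] := mul_nsq pg w0 nu0 nw ns.
have t0 : t != 0.
  by apply/eqP=> e; move: (mulf_neq0 w0 w'0); rewrite ht e expr0n eqxx.
have h0 : h != 0.
  by apply/eqP=> e; move: (mulf_neq0 w0 nu0); rewrite hh e expr0n eqxx.
exists (h / nu * s), 1, (h / nu / t); split.
- by rewrite !mulf_neq0 ?invr_eq0.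
- exact: oner_neq0.
- by rewrite !mulf_neq0 ?invr_eq0.
rewrite !exprMn !exprVn -hh -ht expr1n mul1r /nu /w /w'.
field.
move: nu0; rewrite /nu => nu0. by rewrite nu0 n0 n1 !oppr_eq0 n1 n2.
Qed.

Lemma pdvdF n : (p %| n)%N = ((n%:R : 'F_p) == 0).
Proof. exact: dvdn_pcharf (pchar_Fp pr) n. Qed.

Lemma good_prime : exists N : nat, forall x y : nat, (p %| x ^ 2 + N * y ^ 2)%N -> (p %| y)%N.
Proof.
have [g pg] := Fp_prim.
exists (nat_of_ord (- g)) => x y; rewrite !pdvdF !(natrD, natrX, natrM) natr_Zp.
apply: contraTT => y0; apply/eqP => E; apply: (g_nsq pg).
have E2 : (x%:R : 'F_p) ^+ 2 = g * y%:R ^+ 2 by apply/eqP; rewrite -subr_eq0 -mulNr E.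
by exists (x%:R / y%:R); rewrite expr_div_n E2 mulfK // expf_neq0.
Qed.

Lemma Cp3 (z0 z1 z2 : nat) : ~~ (p %| z0)%N -> ~~ (p %| z1)%N -> ~~ (p %| z2)%N ->
  (exists c0 c1, [/\ ~~ (p %| c0)%N, ~~ (p %| c1)%N & (p %| c0 ^ 2 * z0 + c1 ^ 2 * z1)%N]) \/
  (exists c1 c2, [/\ ~~ (p %| c1)%N, ~~ (p %| c2)%N & (p %| c1 ^ 2 * z1 + c2 ^ 2 * z2)%N]) \/
  (exists c0 c1 c2, [/\ ~~ (p %| c0)%N, ~~ (p %| c1)%N, ~~ (p %| c2)%N &
      (p %| c0 ^ 2 * z0 + c1 ^ 2 * z1 + c2 ^ 2 * z2)%N]).
Proof.
rewrite !pdvdF => n0 n1 n2.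
case: (Cp3F n0 n1 n2) => [[c0 [c1 [h0 h1 E]]]|[[c1 [c2 [h1 h2 E]]]|[c0 [c1 [c2 [h0 h1 h2 E]]]]]].
- left; exists c0, c1; rewrite !pdvdF !natr_Zp h0 h1; split => //.
  by rewrite !(natrD, natrX, natrM) !natr_Zp E.
- right; left; exists c1, c2; rewrite !pdvdF !natr_Zp h1 h2; split => //.
  by rewrite !(natrD, natrX, natrM) !natr_Zp E.
- right; right; exists c0, c1, c2; rewrite !pdvdF !natr_Zp h0 h1 h2; split => //.
  by rewrite !(natrD, natrX, natrM) !natr_Zp E.
Qed.

Lemma solve_lin (t u : nat) : ~~ (p %| u)%N -> exists r, (p %| t + r * u)%N.
Proof.
rewrite pdvdF => u0; exists (nat_of_ord (- t%:R / u%:R : 'F_p)).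
by rewrite pdvdF natrD natrM natr_Zp divfK // addrN.
Qed.

End Fp.

Definition sqf (m : nat) := forall p, prime p -> ~~ (p * p %| m).

Lemma sqf_split m : 1 < m -> sqf m ->
  let p := pdiv m in [/\ prime p, m = p * (m %/ p), coprime p (m %/ p), m %/ p < m & sqf (m %/ p)].
Proof.
move=> m1 hs p; have pp : prime p by apply: pdiv_prime.
have pm : p %| m by apply: pdiv_dvd.
have E : m = p * (m %/ p) by rewrite mulnC divnK.
split => //.
- rewrite prime_coprime //; apply/negP => h; have := hs p pp.
  by rewrite [X in p * p %| X]E dvdn_pmul2l ?prime_gt0 // h.
- by rewrite ltn_Pdiv ?prime_gt1 // ltnW.
- move=> q qp; apply/negP => h; have := hs q qp.
  by rewrite [X in q * q %| X]E dvdn_mull.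
Qed.

Lemma sqf_dvd m X : 0 < m -> sqf m -> (forall p, prime p -> p %| m -> p %| X) -> m %| X.
Proof.
elim/ltn_ind: m => m IH m0 hs hX.
have [m1|] := leqP m 1; first by have -> : m = 1 by apply/eqP; rewrite eqn_leq m1 m0.
move=> m1; have [pp E co lt hs'] := sqf_split m1 hs.
rewrite E Gauss_dvd //; apply/andP; split.
  by apply: hX => //; apply: pdiv_dvd.
apply: IH => //.
- by rewrite divn_gt0 ?prime_gt0 // dvdn_leq // pdiv_dvd.
- by move=> q qp qd; apply: hX => //; rewrite E dvdn_mull.
Qed.

Lemma sqf_of_squarefree m : 0 < m -> squarefree m -> sqf m.
Proof.
move=> m0 /forallP H p pp; have [lepm|ltmp] := leqP p m.
  by have := H (Ordinal (lepm : p < m.+1)); rewrite /= pp.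
apply/negP => /(dvdn_leq m0); rewrite leqNgt; apply/negP/negPn.
by apply: (leq_trans ltmp); rewrite leq_pmulr ?prime_gt0.
Qed.

Definition good m N := forall p, prime p -> p %| m ->
  forall x y, p %| x ^ 2 + N * y ^ 2 -> p %| y.

Lemma good_mod q N N' x y : N = N' %[mod q] ->
  (q %| x ^ 2 + N * y ^ 2) = (q %| x ^ 2 + N' * y ^ 2).
Proof.
move=> E; rewrite /dvdn; congr (_ == 0).
by rewrite -modnDmr -modnMml E modnMml modnDmr.
Qed.

Lemma good_exists m : 0 < m -> odd m -> sqf m -> exists N, good m N.
Proof.
elim/ltn_ind: m => m IH m0 om hs.
have [m1|] := leqP m 1.
  exists 0 => p pp; have -> : m = 1 by apply/eqP; rewrite eqn_leq m1 m0.
  by rewrite dvdn1 => /eqP p1; move: pp; rewrite p1.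
move=> m1; have [pp E co lt hs'] := sqf_split m1 hs.
set p := pdiv m in pp E co lt hs'.
have m'0 : 0 < m %/ p by rewrite divn_gt0 ?prime_gt0 // dvdn_leq // pdiv_dvd.
have om' : odd (m %/ p) by move: om; rewrite {1}E oddM => /andP[].
have op : odd p by move: om; rewrite {1}E oddM => /andP[].
have [N' gN'] := IH _ lt m'0 om' hs'.
have [Np gNp] := good_prime pp op.
exists (chinese p (m %/ p) Np N') => q qp qd x y.
have : q %| p * (m %/ p) by rewrite -E.
rewrite Euclid_dvdM // => /orP[qdp|qdm'].
- have qp' : q = p by apply/eqP; rewrite -(dvdn_prime2 qp pp).
  rewrite qp' (good_mod x y (chinese_modl co Np N')); exact: gNp.
- have cm := chinese_modr co Np N'.
  have cq : chinese p (m %/ p) Np N' = N' %[mod q].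
    by rewrite -(modn_dvdm _ qdm') cm modn_dvdm.
  rewrite (good_mod x y cq); exact: gN'.
Qed.

Lemma LU m N A B : 0 < m -> sqf m -> good m N -> m %| A ^ 2 + N * B ^ 2 -> (m %| A) /\ (m %| B).
Proof.
move=> m0 hs hg hd.
have hB : m %| B.
  by apply: sqf_dvd => // p pp pm; apply: (hg p pp pm A); apply: dvdn_trans hd.
split => //; apply: sqf_dvd => // p pp pm.
have : p %| A ^ 2 + N * B ^ 2 by apply: dvdn_trans hd.
rewrite dvdn_addl; first by rewrite Euclid_dvdX // andbT.
by apply: dvdn_mull; rewrite Euclid_dvdX // (dvdn_trans pm hB).
Qed.

Lemma LUsum m N A B R T : 0 < m -> sqf m -> good m N -> m ^ 2 %| T ->
  T = A ^ 2 + N * B ^ 2 + m * R -> (m %| A) /\ (m %| B).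
Proof.
move=> m0 hs hg hT E; apply: (LU m0 hs hg).
have : m %| T by apply: dvdn_trans hT; rewrite dvdn_exp.
by rewrite E dvdn_addl // dvdn_mulr.
Qed.

Lemma LPsum m N A B T : 0 < m -> sqf m -> good m N -> m ^ 2 %| T ->
  T = m * (A ^ 2 + N * B ^ 2) -> (m %| A) /\ (m %| B).
Proof.
move=> m0 hs hg hT E; apply: (LU m0 hs hg).
by move: hT; rewrite E expnS expn1 dvdn_pmul2l.
Qed.

Definition Vn m N k := nth 0 [:: m; N * m; 1; m; N * m; N; m; N * m] k.

Lemma core m N (F : nat -> nat) s l : 0 < m -> sqf m -> good m N -> 0 < l -> s + l <= 8 ->
  m ^ 2 %| \sum_(i < l) F i ^ 2 * Vn m N (s + i) -> exists2 i, i < l & m %| F i.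
Proof.
move=> m0 hs hg.
case: s => [|[|[|[|[|[|[|[|s]]]]]]]]; last by move=> h1 h2; exfalso; lia.
- case: l => [|[|[|[|[|[|[|[|[|l]]]]]]]]] //; try by move=> h1 h2; exfalso; lia.
  + move=> _ _; rewrite !big_ord_recr big_ord0 /= /Vn /= => H.
    have [hA hB] : m %| F 0 /\ m %| 0.
      by apply: (@LPsum m N (F 0) (0) _ m0 hs hg H); ring.
    by exists 0.
  + move=> _ _; rewrite !big_ord_recr big_ord0 /= /Vn /= => H.
    have [hA hB] : m %| F 0 /\ m %| F 1.
      by apply: (@LPsum m N (F 0) (F 1) _ m0 hs hg H); ring.
    by exists 0.
  + move=> _ _; rewrite !big_ord_recr big_ord0 /= /Vn /= => H.
    have [hA hB] : m %| F 2 /\ m %| 0.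
      by apply: (@LUsum m N (F 2) (0) (F 0 ^ 2 * 1 + F 1 ^ 2 * N) _ m0 hs hg H); ring.
    by exists 2.
  + move=> _ _; rewrite !big_ord_recr big_ord0 /= /Vn /= => H.
    have [hA hB] : m %| F 2 /\ m %| 0.
      by apply: (@LUsum m N (F 2) (0) (F 0 ^ 2 * 1 + F 1 ^ 2 * N + F 3 ^ 2 * 1) _ m0 hs hg H); ring.
    by exists 2.
  + move=> _ _; rewrite !big_ord_recr big_ord0 /= /Vn /= => H.
    have [hA hB] : m %| F 2 /\ m %| 0.
      by apply: (@LUsum m N (F 2) (0) (F 0 ^ 2 * 1 + F 1 ^ 2 * N + F 3 ^ 2 * 1 + F 4 ^ 2 * N) _ m0 hs hg H); ring.
    by exists 2.
  + move=> _ _; rewrite !big_ord_recr big_ord0 /= /Vn /= => H.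
    have [hA hB] : m %| F 2 /\ m %| F 5.
      by apply: (@LUsum m N (F 2) (F 5) (F 0 ^ 2 * 1 + F 1 ^ 2 * N + F 3 ^ 2 * 1 + F 4 ^ 2 * N) _ m0 hs hg H); ring.
    by exists 2.
  + move=> _ _; rewrite !big_ord_recr big_ord0 /= /Vn /= => H.
    have [hA hB] : m %| F 2 /\ m %| F 5.
      by apply: (@LUsum m N (F 2) (F 5) (F 0 ^ 2 * 1 + F 1 ^ 2 * N + F 3 ^ 2 * 1 + F 4 ^ 2 * N + F 6 ^ 2 * 1) _ m0 hs hg H); ring.
    by exists 2.
  + move=> _ _; rewrite !big_ord_recr big_ord0 /= /Vn /= => H.
    have [hA hB] : m %| F 2 /\ m %| F 5.
      by apply: (@LUsum m N (F 2) (F 5) (F 0 ^ 2 * 1 + F 1 ^ 2 * N + F 3 ^ 2 * 1 + F 4 ^ 2 * N + F 6 ^ 2 * 1 + F 7 ^ 2 * N) _ m0 hs hg H); ring.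
    by exists 2.
- case: l => [|[|[|[|[|[|[|[|l]]]]]]]] //; try by move=> h1 h2; exfalso; lia.
  + move=> _ _; rewrite !big_ord_recr big_ord0 /= /Vn /= => H.
    have [hA hB] : m %| 0 /\ m %| F 0.
      by apply: (@LPsum m N (0) (F 0) _ m0 hs hg H); ring.
    by exists 0.
  + move=> _ _; rewrite !big_ord_recr big_ord0 /= /Vn /= => H.
    have [hA hB] : m %| F 1 /\ m %| 0.
      by apply: (@LUsum m N (F 1) (0) (F 0 ^ 2 * N) _ m0 hs hg H); ring.
    by exists 1.
  + move=> _ _; rewrite !big_ord_recr big_ord0 /= /Vn /= => H.
    have [hA hB] : m %| F 1 /\ m %| 0.
      by apply: (@LUsum m N (F 1) (0) (F 0 ^ 2 * N + F 2 ^ 2 * 1) _ m0 hs hg H); ring.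
    by exists 1.
  + move=> _ _; rewrite !big_ord_recr big_ord0 /= /Vn /= => H.
    have [hA hB] : m %| F 1 /\ m %| 0.
      by apply: (@LUsum m N (F 1) (0) (F 0 ^ 2 * N + F 2 ^ 2 * 1 + F 3 ^ 2 * N) _ m0 hs hg H); ring.
    by exists 1.
  + move=> _ _; rewrite !big_ord_recr big_ord0 /= /Vn /= => H.
    have [hA hB] : m %| F 1 /\ m %| F 4.
      by apply: (@LUsum m N (F 1) (F 4) (F 0 ^ 2 * N + F 2 ^ 2 * 1 + F 3 ^ 2 * N) _ m0 hs hg H); ring.
    by exists 1.
  + move=> _ _; rewrite !big_ord_recr big_ord0 /= /Vn /= => H.
    have [hA hB] : m %| F 1 /\ m %| F 4.
      by apply: (@LUsum m N (F 1) (F 4) (F 0 ^ 2 * N + F 2 ^ 2 * 1 + F 3 ^ 2 * N + F 5 ^ 2 * 1) _ m0 hs hg H); ring.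
    by exists 1.
  + move=> _ _; rewrite !big_ord_recr big_ord0 /= /Vn /= => H.
    have [hA hB] : m %| F 1 /\ m %| F 4.
      by apply: (@LUsum m N (F 1) (F 4) (F 0 ^ 2 * N + F 2 ^ 2 * 1 + F 3 ^ 2 * N + F 5 ^ 2 * 1 + F 6 ^ 2 * N) _ m0 hs hg H); ring.
    by exists 1.
- case: l => [|[|[|[|[|[|[|l]]]]]]] //; try by move=> h1 h2; exfalso; lia.
  + move=> _ _; rewrite !big_ord_recr big_ord0 /= /Vn /= => H.
    have [hA hB] : m %| F 0 /\ m %| 0.
      by apply: (@LUsum m N (F 0) (0) (0) _ m0 hs hg H); ring.
    by exists 0.
  + move=> _ _; rewrite !big_ord_recr big_ord0 /= /Vn /= => H.
    have [hA hB] : m %| F 0 /\ m %| 0.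
      by apply: (@LUsum m N (F 0) (0) (F 1 ^ 2 * 1) _ m0 hs hg H); ring.
    by exists 0.
  + move=> _ _; rewrite !big_ord_recr big_ord0 /= /Vn /= => H.
    have [hA hB] : m %| F 0 /\ m %| 0.
      by apply: (@LUsum m N (F 0) (0) (F 1 ^ 2 * 1 + F 2 ^ 2 * N) _ m0 hs hg H); ring.
    by exists 0.
  + move=> _ _; rewrite !big_ord_recr big_ord0 /= /Vn /= => H.
    have [hA hB] : m %| F 0 /\ m %| F 3.
      by apply: (@LUsum m N (F 0) (F 3) (F 1 ^ 2 * 1 + F 2 ^ 2 * N) _ m0 hs hg H); ring.
    by exists 0.
  + move=> _ _; rewrite !big_ord_recr big_ord0 /= /Vn /= => H.
    have [hA hB] : m %| F 0 /\ m %| F 3.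
      by apply: (@LUsum m N (F 0) (F 3) (F 1 ^ 2 * 1 + F 2 ^ 2 * N + F 4 ^ 2 * 1) _ m0 hs hg H); ring.
    by exists 0.
  + move=> _ _; rewrite !big_ord_recr big_ord0 /= /Vn /= => H.
    have [hA hB] : m %| F 0 /\ m %| F 3.
      by apply: (@LUsum m N (F 0) (F 3) (F 1 ^ 2 * 1 + F 2 ^ 2 * N + F 4 ^ 2 * 1 + F 5 ^ 2 * N) _ m0 hs hg H); ring.
    by exists 0.
- case: l => [|[|[|[|[|[|l]]]]]] //; try by move=> h1 h2; exfalso; lia.
  + move=> _ _; rewrite !big_ord_recr big_ord0 /= /Vn /= => H.
    have [hA hB] : m %| F 0 /\ m %| 0.
      by apply: (@LPsum m N (F 0) (0) _ m0 hs hg H); ring.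
    by exists 0.
  + move=> _ _; rewrite !big_ord_recr big_ord0 /= /Vn /= => H.
    have [hA hB] : m %| F 0 /\ m %| F 1.
      by apply: (@LPsum m N (F 0) (F 1) _ m0 hs hg H); ring.
    by exists 0.
  + move=> _ _; rewrite !big_ord_recr big_ord0 /= /Vn /= => H.
    have [hA hB] : m %| 0 /\ m %| F 2.
      by apply: (@LUsum m N (0) (F 2) (F 0 ^ 2 * 1 + F 1 ^ 2 * N) _ m0 hs hg H); ring.
    by exists 2.
  + move=> _ _; rewrite !big_ord_recr big_ord0 /= /Vn /= => H.
    have [hA hB] : m %| 0 /\ m %| F 2.
      by apply: (@LUsum m N (0) (F 2) (F 0 ^ 2 * 1 + F 1 ^ 2 * N + F 3 ^ 2 * 1) _ m0 hs hg H); ring.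
    by exists 2.
  + move=> _ _; rewrite !big_ord_recr big_ord0 /= /Vn /= => H.
    have [hA hB] : m %| 0 /\ m %| F 2.
      by apply: (@LUsum m N (0) (F 2) (F 0 ^ 2 * 1 + F 1 ^ 2 * N + F 3 ^ 2 * 1 + F 4 ^ 2 * N) _ m0 hs hg H); ring.
    by exists 2.
- case: l => [|[|[|[|[|l]]]]] //; try by move=> h1 h2; exfalso; lia.
  + move=> _ _; rewrite !big_ord_recr big_ord0 /= /Vn /= => H.
    have [hA hB] : m %| 0 /\ m %| F 0.
      by apply: (@LPsum m N (0) (F 0) _ m0 hs hg H); ring.
    by exists 0.
  + move=> _ _; rewrite !big_ord_recr big_ord0 /= /Vn /= => H.
    have [hA hB] : m %| 0 /\ m %| F 1.
      by apply: (@LUsum m N (0) (F 1) (F 0 ^ 2 * N) _ m0 hs hg H); ring.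
    by exists 1.
  + move=> _ _; rewrite !big_ord_recr big_ord0 /= /Vn /= => H.
    have [hA hB] : m %| 0 /\ m %| F 1.
      by apply: (@LUsum m N (0) (F 1) (F 0 ^ 2 * N + F 2 ^ 2 * 1) _ m0 hs hg H); ring.
    by exists 1.
  + move=> _ _; rewrite !big_ord_recr big_ord0 /= /Vn /= => H.
    have [hA hB] : m %| 0 /\ m %| F 1.
      by apply: (@LUsum m N (0) (F 1) (F 0 ^ 2 * N + F 2 ^ 2 * 1 + F 3 ^ 2 * N) _ m0 hs hg H); ring.
    by exists 1.
- case: l => [|[|[|[|l]]]] //; try by move=> h1 h2; exfalso; lia.
  + move=> _ _; rewrite !big_ord_recr big_ord0 /= /Vn /= => H.
    have [hA hB] : m %| 0 /\ m %| F 0.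
      by apply: (@LUsum m N (0) (F 0) (0) _ m0 hs hg H); ring.
    by exists 0.
  + move=> _ _; rewrite !big_ord_recr big_ord0 /= /Vn /= => H.
    have [hA hB] : m %| 0 /\ m %| F 0.
      by apply: (@LUsum m N (0) (F 0) (F 1 ^ 2 * 1) _ m0 hs hg H); ring.
    by exists 0.
  + move=> _ _; rewrite !big_ord_recr big_ord0 /= /Vn /= => H.
    have [hA hB] : m %| 0 /\ m %| F 0.
      by apply: (@LUsum m N (0) (F 0) (F 1 ^ 2 * 1 + F 2 ^ 2 * N) _ m0 hs hg H); ring.
    by exists 0.
- case: l => [|[|[|l]]] //; try by move=> h1 h2; exfalso; lia.
  + move=> _ _; rewrite !big_ord_recr big_ord0 /= /Vn /= => H.
    have [hA hB] : m %| F 0 /\ m %| 0.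
      by apply: (@LPsum m N (F 0) (0) _ m0 hs hg H); ring.
    by exists 0.
  + move=> _ _; rewrite !big_ord_recr big_ord0 /= /Vn /= => H.
    have [hA hB] : m %| F 0 /\ m %| F 1.
      by apply: (@LPsum m N (F 0) (F 1) _ m0 hs hg H); ring.
    by exists 0.
- case: l => [|[|l]] //; try by move=> h1 h2; exfalso; lia.
  + move=> _ _; rewrite !big_ord_recr big_ord0 /= /Vn /= => H.
    have [hA hB] : m %| 0 /\ m %| F 0.
      by apply: (@LPsum m N (0) (F 0) _ m0 hs hg H); ring.
    by exists 0.
Qed.

Section Zn.
Variable n : nat.
Hypothesis n1 : 1 < n.

Lemma Zn_eq0 k : ((k%:R : 'Z_n) == 0)%R = (n %| k).
Proof.
apply/eqP/idP => [h|h].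
  by have := val_Zp_nat n1 k; rewrite h /= => /esym/eqP.
by apply: val_inj; rewrite /= val_Zp_nat //; apply/eqP.
Qed.

Definition sqroot (a : 'Z_n) : 'Z_n := odflt 0%R [pick x | a == x ^+ 2]%R.

Lemma sqrootP (a : 'Z_n) : sqset n a -> a = ((nat_of_ord (sqroot a)) ^ 2)%N%:R%R.
Proof.
rewrite /sqroot /sqset => /existsP[x hx]; case: pickP => [y /eqP ->|/(_ x)]; last by rewrite hx.
by rewrite natrX natr_Zp.
Qed.

End Zn.

Definition bad8 m N : seq 'Z_(m ^ 2) := mkseq (fun i => (Vn m N i)%:R%R) 8.

Lemma no_zs m N z : 1 < m -> sqf m -> good m N -> infix z (bad8 m N) ->
  ~ weighted_zero_sum (m ^ 2) (sqset_star (m ^ 2)) z.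
Proof.
move=> m1 hs hg /infixP[s1 [s2 E]] [l0 [a [sa [al sum0]]]].
have n1 : 1 < m ^ 2 by rewrite (ltn_sqr 1).
have m0 : 0 < m by apply: ltnW.
have sz : size s1 + size z <= 8.
  by have := congr1 size E; rewrite size_mkseq !size_cat => ->; rewrite addnA leq_addr.
have az i : i < size z -> (a`_i)%R = ((nat_of_ord (@sqroot (m ^ 2)%N (a`_i)%R)) ^ 2)%N%:R%R /\ (a`_i != 0)%R.
  move=> iz; have /andP[h1 h2] : sqset_star (m ^ 2) (a`_i)%R.
    by apply: (allP al); apply: mem_nth; rewrite sa.
  by split => //; apply: sqrootP.
have zz i : i < size z -> (z`_i)%R = (Vn m N (size s1 + i))%:R%R.
  move=> iz; have := congr1 (fun s => nth 0%R s (size s1 + i)) E.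
  rewrite nth_cat ltnNge leq_addr /= addKn nth_cat iz => <-.
  by rewrite nth_mkseq //; apply: leq_trans sz; rewrite ltn_add2l.
set F := fun i => nat_of_ord (@sqroot (m ^ 2)%N (a`_i)%R).
have : m ^ 2 %| \sum_(i < size z) F i ^ 2 * Vn m N (size s1 + i).
  rewrite -(Zn_eq0 n1) natr_sum; apply/eqP; rewrite -[RHS]sum0; apply: eq_bigr => i _.
  by rewrite natrM (zz _ (ltn_ord i)) -(proj1 (az _ (ltn_ord i))).
case/(core m0 hs hg l0 sz) => // i iz mF.
have [E1 E2] := az i iz; move: E2; rewrite E1 (Zn_eq0 n1).
by rewrite -/(F i) (dvdn_exp2r 2 mF).
Qed.

Section Upper.
Variable p : nat.
Hypothesis pp : prime p.
Hypothesis op : odd p.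

Lemma gap (Y C : nat -> nat) a b : (forall j, a <= j < b -> p %| Y j) ->
  p %| \sum_(a <= j < b) C j ^ 2 * Y j.
Proof.
move=> h; rewrite big_nat_cond; apply: dvdn_sum => j /andP[hj _].
by apply: dvdn_mull; apply: h.
Qed.

Lemma split_ends (f : nat -> nat) a b : a < b ->
  \sum_(a <= j < b.+1) f j = f a + \sum_(a.+1 <= j < b) f j + f b.
Proof. by move=> ab; rewrite big_nat_recr ?(ltnW ab) // big_ltn. Qed.

Lemma pp2 X : p %| X -> p ^ 2 %| p * X.
Proof. by move=> h; rewrite expnS expn1 dvdn_pmul2l ?prime_gt0. Qed.

Lemma lift (Y C : nat -> nat) s e u : s <= u < e -> ~~ (p %| Y u) ->
  (forall k, s <= k < e -> ~~ (p %| C k)) -> p %| \sum_(s <= k < e) C k ^ 2 * Y k ->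
  exists C' : nat -> nat, (forall k, s <= k < e -> ~~ (p %| C' k)) /\
     p ^ 2 %| \sum_(s <= k < e) C' k ^ 2 * Y k.
Proof.
move=> hu Yu hC hS.
set S := \sum_(s <= k < e) C k ^ 2 * Y k in hS.
have ES : S = p * (S %/ p) by rewrite mulnC divnK.
have nd : ~~ (p %| 2 * C u * Y u).
  rewrite !Euclid_dvdM // negb_or Yu andbT negb_or hC // andbT.
  apply/negP => /(dvdn_leq (isT : 0 < 2)) p2.
  have : p = 2 by apply/eqP; rewrite eqn_leq p2 prime_gt1.
  by move=> e2; move: op; rewrite e2.
have [r hr] := solve_lin pp (S %/ p) nd.
exists (fun k => if k == u then C u + p * r else C k); split.
  move=> k hk; case: eqP => [_|_]; last exact: hC.
  by rewrite dvdn_addl ?dvdn_mulr // hC.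
rewrite (eq_bigr (fun k => C k ^ 2 * Y k +
   (if k == u then (2 * C u * p * r + p ^ 2 * r ^ 2) * Y u else 0))); last first.
  by move=> k _; case: eqP => [->|_]; [ring | rewrite addn0].
rewrite big_split /= -/S -big_mkcond /= big_nat1_eq hu.
have -> : S + (2 * C u * p * r + p ^ 2 * r ^ 2) * Y u =
   p * (S %/ p + r * (2 * C u * Y u)) + p ^ 2 * (r ^ 2 * Y u).
  by rewrite {1}ES; ring.
by rewrite dvdn_add ?pp2 // dvdn_mulr.
Qed.

Lemma reidx (f : nat -> nat) s e : \sum_(i < e - s) f (s + i) = \sum_(s <= k < e) f k.
Proof.
rewrite -(big_mkord xpredT (fun i => f (s + i))).
have := @big_addn _ 0 addn 0 e s xpredT f; rewrite add0n => ->.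
by apply: eq_bigr => i _; rewrite addnC.
Qed.

Variable m : nat.
Hypothesis m1 : 1 < m.
Hypothesis pm : p %| m.

Definition Yv (y : seq 'Z_(m ^ 2)) k : nat := nat_of_ord (nth 0%R y k).

Lemma assemble (y : seq 'Z_(m ^ 2)) s e (C : nat -> nat) : s < e -> e <= size y ->
  (forall k, s <= k < e -> ~~ (p %| C k)) ->
  p ^ 2 %| \sum_(s <= k < e) C k ^ 2 * Yv y k ->
  exists z, infix z y /\ weighted_zero_sum (m ^ 2) (sqset_star (m ^ 2)) z.
Proof.
move=> se ey hC hS.
have n1 : 1 < m ^ 2 by rewrite (ltn_sqr 1).
set l := e - s; set m' := m %/ p.
have Em : m = p * m' by rewrite mulnC divnK.
have m'0 : 0 < m' by rewrite divn_gt0 ?prime_gt0 // dvdn_leq // ltnW.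
have szz : size (take l (drop s y)) = l.
  by rewrite size_takel // size_drop /l leq_sub2r.
exists (take l (drop s y)); split.
  by apply/infixP; exists (take s y), (drop l (drop s y)); rewrite !cat_take_drop.
split; first by rewrite szz subn_gt0.
exists (mkseq (fun i => ((m' * C (s + i)) ^ 2)%N%:R%R) l); split.
  by rewrite size_mkseq szz.
split.
  apply/allP => w /mapP[i]; rewrite mem_iota => /andP[_ il] ->.
  have hk : s <= s + i < e by rewrite leq_addr /= -ltn_subRL.
  apply/andP; split.
    rewrite (Zn_eq0 n1) dvdn_pexp2r // Em mulnC dvdn_pmul2l //.
    exact: hC.
  by apply/existsP; exists ((m' * C (s + i))%:R)%R; rewrite natrX.
rewrite szz.
have -> : (\sum_(i < l) (mkseq (fun i => ((m' * C (s + i)) ^ 2)%N%:R%R) l)`_i *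
      (take l (drop s y))`_i)%R =
    (\sum_(i < l) (m' * C (s + i)) ^ 2 * Yv y (s + i))%:R%R.
  rewrite natr_sum; apply: eq_bigr => i _.
  rewrite nth_mkseq // nth_take // nth_drop natrM /Yv natr_Zp //.
apply/eqP; rewrite (Zn_eq0 n1).
rewrite (eq_bigr (fun i : 'I_l => m' ^ 2 * (C (s + i) ^ 2 * Yv y (s + i)))); last first.
  by move=> i _; rewrite expnMn mulnA.
rewrite -big_distrr /= (reidx (fun k => C k ^ 2 * Yv y k)) Em expnMn mulnC.
by rewrite dvdn_pmul2l ?expn_gt0 ?m'0.
Qed.

End Upper.

Lemma next_U (P : nat -> bool) k : ~~ [&& P k, P k.+1 & P k.+2] ->
  exists k', [/\ k <= k' <= k.+2, ~~ P k' & forall j, k <= j < k' -> P j].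
Proof.
case Pk: (P k); last first.
  move=> _; exists k; split; first by lia.
    by rewrite Pk.
  by move=> j hj; lia.
case Pk1: (P k.+1); last first.
  move=> _; exists k.+1; split; first by lia.
    by rewrite Pk1.
  by move=> j hj; have -> : j = k by lia.
case Pk2: (P k.+2) => // _; exists k.+2; split; first by lia.
  by rewrite Pk2.
by move=> j hj; have [->|->] : j = k \/ j = k.+1 by lia.
Qed.

Ltac clia := repeat match goal with H : ?T |- _ =>
  lazymatch T with
  | is_true (leq _ _) => fail
  | is_true (_ && _) => fail
  | @eq nat _ _ => fail
  | _ => clear H
  end end; lia.

Lemma sum2 (f : nat -> nat) k : \sum_(k <= j < k.+2) f j = f k + f k.+1.
Proof. by rewrite big_ltn; [rewrite big_nat1 | lia]. Qed.

Lemma sum3 (f : nat -> nat) k : \sum_(k <= j < k.+3) f j = f k + f k.+1 + f k.+2.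
Proof. by rewrite big_ltn; [rewrite (sum2 f k.+1) addnA | lia]. Qed.

Lemma help2 p a b G : p %| G -> p %| a + b -> p %| a + G + b.
Proof. by move=> hG hab; rewrite addnAC dvdn_addl. Qed.

Lemma help3 p a b c G1 G2 : p %| G1 -> p %| G2 -> p %| a + b + c -> p %| a + G1 + b + (G2 + c).
Proof.
move=> h1 h2 h; rewrite (_ : a + G1 + b + (G2 + c) = (a + b + c) + (G1 + G2)); last by ring.
by rewrite dvdn_add // dvdn_add.
Qed.

Lemma pp2' p A B : prime p -> p %| A -> B = p * A -> p ^ 2 %| B.
Proof. by move=> pp h ->; apply: pp2. Qed.

Lemma ndiv1 p : prime p -> ~~ (p %| 1).
Proof. by move=> pp; rewrite dvdn1; apply/eqP => e1; move: pp; rewrite e1. Qed.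

Lemma upper m (y : seq 'Z_(m ^ 2)) : 1 < m -> odd m -> size y = 9 ->
  exists z, infix z y /\ weighted_zero_sum (m ^ 2) (sqset_star (m ^ 2)) z.
Proof.
move=> m1 om sy.
have pp : prime (pdiv m) := pdiv_prime m1.
have pm : pdiv m %| m := pdiv_dvd m.
set p := pdiv m in pp pm.
have op : odd p.
  case: (boolP (odd p)) => // ep.
  have : 2 %| m by apply: dvdn_trans pm; rewrite dvdn2.
  by rewrite dvdn2 om.
case: (boolP [exists k : 'I_7, [&& p %| Yv y k, p %| Yv y k.+1 & p %| Yv y k.+2]]).
  case/existsP => [[k hk]] /= /and3P[h0 h1 h2].
  set v := fun j => Yv y j %/ p.
  have Ev j : p %| Yv y j -> Yv y j = p * v j by move=> h; rewrite /v mulnC divnK.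
  have single j : k <= j <= k.+2 -> p %| Yv y j -> p %| v j ->
      exists z, infix z y /\ weighted_zero_sum (m ^ 2) (sqset_star (m ^ 2)) z.
    move=> hj hY hv; apply: (assemble pp m1 pm (s:=j) (e:=j.+1) (C:=fun _ => 1));
      rewrite ?sy; try clia.
      by move=> i _; apply: ndiv1.
    by rewrite big_nat1 exp1n mul1n (Ev _ hY); apply: pp2.
  case: (boolP (p %| v k)) => [hv|v0]; first by apply: (single k) => //; clia.
  case: (boolP (p %| v k.+1)) => [hv|v1]; first by apply: (single k.+1) => //; clia.
  case: (boolP (p %| v k.+2)) => [hv|v2]; first by apply: (single k.+2) => //; clia.
  have e10 : (k.+1 == k) = false by apply/eqP; clia.
  have e20 : (k.+2 == k) = false by apply/eqP; clia.
  have e21 : (k.+2 == k.+1) = false by apply/eqP; clia.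
  case: (Cp3 pp op v0 v1 v2) => [[c0 [c1 [n0 n1 hd]]]|[[c1 [c2 [n1 n2 hd]]]|[c0 [c1 [c2 [n0 n1 n2 hd]]]]]].
  - apply: (assemble pp m1 pm (s:=k) (e:=k.+2) (C:=fun j => if j == k then c0 else c1));
      rewrite ?sy; try clia.
      by move=> j _; case: (j == k).
    rewrite sum2 /= eqxx e10 (Ev _ h0) (Ev _ h1).
    by apply: (pp2' pp hd); ring.
  - apply: (assemble pp m1 pm (s:=k.+1) (e:=k.+3) (C:=fun j => if j == k.+1 then c1 else c2));
      rewrite ?sy; try clia.
      by move=> j _; case: (j == k.+1).
    rewrite sum2 /= eqxx e21 (Ev _ h1) (Ev _ h2).
    by apply: (pp2' pp hd); ring.
  - apply: (assemble pp m1 pm (s:=k) (e:=k.+3)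
        (C:=fun j => if j == k then c0 else if j == k.+1 then c1 else c2));
      rewrite ?sy; try clia.
      by move=> j _; case: (j == k); case: (j == k.+1).
    rewrite sum3 /= eqxx e10 eqxx e20 e21 (Ev _ h0) (Ev _ h1) (Ev _ h2).
    by apply: (pp2' pp hd); ring.
move/existsPn => H.
have nH k : k < 7 -> ~~ [&& p %| Yv y k, p %| Yv y k.+1 & p %| Yv y k.+2].
  by move=> hk; exact: (H (Ordinal hk)).
have [k0 [hk0 u0 g0]] := @next_U (fun j => p %| Yv y j) 0 (nH 0 isT).
have [k1 [hk1 u1 g1]] := @next_U (fun j => p %| Yv y j) k0.+1 (nH k0.+1 ltac:(clia)).
have [k2 [hk2 u2 g2]] := @next_U (fun j => p %| Yv y j) k1.+1 (nH k1.+1 ltac:(clia)).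
have e10 : (k1 == k0) = false by apply/eqP; clia.
have e20 : (k2 == k0) = false by apply/eqP; clia.
have e21 : (k2 == k1) = false by apply/eqP; clia.
pose C c0 c1 c2 := fun j => if j == k0 then c0 else if j == k1 then c1 else if j == k2 then c2 else 1.
have nC c0 c1 c2 : ~~ (p %| c0) -> ~~ (p %| c1) -> ~~ (p %| c2) -> forall j, ~~ (p %| C c0 c1 c2 j).
  move=> n0 n1 n2 j; rewrite /C; case: (j == k0) => //; case: (j == k1) => //.
  by case: (j == k2) => //; apply: ndiv1.
have n1' := ndiv1 pp.
case: (Cp3 pp op u0 u1 u2) => [[c0 [c1 [n0 n1 hd]]]|[[c1 [c2 [n1 n2 hd]]]|[c0 [c1 [c2 [n0 n1 n2 hd]]]]]].
- have [C' [hC' hS']] := lift pp op (Y:=Yv y) (C:=C c0 c1 1) (s:=k0) (e:=k1.+1) (u:=k0)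
     ltac:(clia) u0 (fun j _ => nC _ _ _ n0 n1 n1' j) ltac:(
       rewrite split_ends; [|clia]; rewrite /C /= eqxx e10 eqxx;
       apply: help2 hd; apply: gap => j hj; apply: g1; clia).
  by apply: (assemble pp m1 pm (s:=k0) (e:=k1.+1) (C:=C')) => //; rewrite ?sy; clia.
- have [C' [hC' hS']] := lift pp op (Y:=Yv y) (C:=C 1 c1 c2) (s:=k1) (e:=k2.+1) (u:=k1)
     ltac:(clia) u1 (fun j _ => nC _ _ _ n1' n1 n2 j) ltac:(
       rewrite split_ends; [|clia]; rewrite /C /= e10 eqxx e20 e21 eqxx;
       apply: help2 hd; apply: gap => j hj; apply: g2; clia).
  by apply: (assemble pp m1 pm (s:=k1) (e:=k2.+1) (C:=C')) => //; rewrite ?sy; clia.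
- have [C' [hC' hS']] := lift pp op (Y:=Yv y) (C:=C c0 c1 c2) (s:=k0) (e:=k2.+1) (u:=k0)
     ltac:(clia) u0 (fun j _ => nC _ _ _ n0 n1 n2 j) ltac:(
       rewrite (big_cat_nat _ (n:=k1.+1)); [|clia|clia]; rewrite split_ends; [|clia];
       rewrite big_nat_recr /=; [|clia];
       rewrite /C /= eqxx e10 eqxx e20 e21 eqxx;
       apply: help3 hd; apply: gap => j hj; [apply: g1 | apply: g2]; clia).
  by apply: (assemble pp m1 pm (s:=k0) (e:=k2.+1) (C:=C')) => //; rewrite ?sy; clia.
Qed.

Theorem mainTheorem20 (m : nat) :
  (1 < m)%N -> odd m -> squarefree m ->
  is_C_constant (m ^ 2) (sqset_star (m ^ 2)) 9.
Proof.
move=> m1 om sq.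
have m0 : (0 < m)%N by apply: ltnW.
have hs := sqf_of_squarefree m0 sq.
have [N hg] := good_exists m0 om hs.
split => //; split.
  by move=> y sy; apply: upper.
move=> t t0 t9 HC.
have st : size (take t (bad8 m N)) = t.
  by rewrite size_takel // size_mkseq; apply: ltnW.
have [z [hz wz]] := HC _ st.
apply: (no_zs m1 hs hg _ wz).
apply: (infix_trans hz); apply/infixP; exists [::], (drop t (bad8 m N)).
by rewrite cat0s cat_take_drop.
Qed.
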